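(* Let $x_{00},x_{10},x_{11},x_{01}\in\mathbb{RP}^3$ be a planar quadrilateral with Laplace points $y^1$ (intersection of lines $x_{00}x_{10}$ and $x_{01}x_{11}$) and $y^2$ (intersection of lines $x_{00}x_{01}$ and $x_{10}x_{11}$), and let $N\ge2$ be an integer. Let $p_0,p_1,q_0,q_1:\{0,\dots,N\}\to\mathbb{RP}^3$ be polylines with $p_j(iN)=q_i(jN)=x_{ij}$ for $i,j\in\{0,1\}$, such that $p_0(k),p_1(k),y^2$ are collinear for all $k$ and $q_0(\ell),q_1(\ell),y^1$ are collinear for all $\ell$. Then there exists a unique multi-Q-net $f:\{0,\dots,N\}^2\to\mathbb{RP}^3$ with $f(k,jN)=p_j(k)$ for all $k\in\{0,\dots,N\}$, $j\in\{0,1\}$, and $f(iN,\ell)=q_i(\ell)$ for all $\ell\in\{0,\dots,N\}$, $i\in\{0,1\}$.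
   Context: A multi-Q-net on $\{0,\dots,N\}^2$ is a map $f$ to $\mathbb{RP}^3$ such that for all $i_0\ne i_1$, $j_0\ne j_1$ the points $f(i_0,j_0),f(i_0,j_1),f(i_1,j_1),f(i_1,j_0)$ are coplanar. Data are assumed in general position. *)

(* Defs.v *)
(* Points of RP^3 over a real field R are represented by
   nonzero row vectors in R^4 (homogeneous coordinates); two vectors
   represent the same projective point iff they span the same line. *)
From HB Require Import structures.
From mathcomp Require Import all_boot all_order all_algebra.
Set Implicit Arguments.
Unset Strict Implicit.
Unset Printing Implicit Defensive.
Import Order.TTheory GRing.Theory Num.Theory.
Local Open Scope ring_scope.

Section Proj.
Variable R : realFieldType.
Notation vec := 'rV[R]_4.

Definition is_pt (v : vec) : Prop := v != 0.

Definition peq (u v : vec) : Prop := (u == v)%MS.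

Definition collinear (a b c : vec) : Prop :=
  (\rank (col_mx a (col_mx b c)) <= 2)%N.

Definition coplanar (a b c d : vec) : Prop :=
  (\rank (col_mx a (col_mx b (col_mx c d))) <= 3)%N.

Definition span3 (a b c : vec) : 'M[R]_(3, 4) := col_mx a (col_mx b c).

Definition planes_meet_in_point (a1 b1 c1 a2 b2 c2 a3 b3 c3 : vec) : Prop :=
  [/\ \rank (span3 a1 b1 c1) = 3%N, \rank (span3 a2 b2 c2) = 3%N,
      \rank (span3 a3 b3 c3) = 3%N &
      \rank (span3 a1 b1 c1 :&: span3 a2 b2 c2 :&: span3 a3 b3 c3)%MS = 1%N].

Definition multi_Q_net (N : nat) (f : 'I_N.+1 -> 'I_N.+1 -> vec) : Prop :=
  (forall i j, is_pt (f i j)) /\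
  (forall i0 i1 j0 j1 : 'I_N.+1, i0 != i1 -> j0 != j1 ->
     coplanar (f i0 j0) (f i0 j1) (f i1 j1) (f i1 j0)).

Definition has_boundary (N : nat) (f : 'I_N.+1 -> 'I_N.+1 -> vec)
    (p0 p1 q0 q1 : 'I_N.+1 -> vec) : Prop :=
  forall k : 'I_N.+1,
    [/\ peq (f k ord0) (p0 k), peq (f k ord_max) (p1 k),
        peq (f ord0 k) (q0 k) & peq (f ord_max k) (q1 k)].

(* The standing "general position" assumption made explicit:
   - the quadrilateral is nondegenerate (no three vertices collinear);
   - for interior k, the points p0 k, p1 k, y2 are pairwise distinct,
     and likewise q0 k, q1 k, y1;
   - for interior k, l the planes <x00,p0 k,q0 l>, <x10,p0 k,q1 l>,
     <x01,p1 k,q0 l> are planes meeting in a single point. *)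
Definition general_position (N : nat) (x00 x10 x11 x01 y1 y2 : vec)
    (p0 p1 q0 q1 : 'I_N.+1 -> vec) : Prop :=
  [/\ [/\ ~ collinear x00 x10 x11, ~ collinear x10 x11 x01,
          ~ collinear x11 x01 x00 & ~ collinear x01 x00 x10],
      (forall k : 'I_N.+1, (0 < k)%N -> (k < N)%N ->
         [/\ ~ peq (p0 k) y2, ~ peq (p1 k) y2 & ~ peq (p0 k) (p1 k)] /\
         [/\ ~ peq (q0 k) y1, ~ peq (q1 k) y1 & ~ peq (q0 k) (q1 k)]) &
      (forall k l : 'I_N.+1, (0 < k)%N -> (k < N)%N -> (0 < l)%N -> (l < N)%N ->
         planes_meet_in_point x00 (p0 k) (q0 l) x10 (p0 k) (q1 l)
                              x01 (p1 k) (q0 l))].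

End Proj.

(* Main.v *)
Require Import Defs.
From HB Require Import structures.
From mathcomp Require Import all_boot all_order all_algebra.
From mathcomp Require Import zify.
Set Implicit Arguments. Unset Strict Implicit. Unset Printing Implicit Defensive.
Import Order.TTheory GRing.Theory Num.Theory.
Local Open Scope ring_scope.

Lemma opp_sub (R : realFieldType) m1 m2 n (A : 'M[R]_(m1, n)) (B : 'M[R]_(m2, n)) :
  (A <= B)%MS -> (- A <= B)%MS.
Proof. by rewrite eqmx_opp. Qed.

Ltac atom := first [ exact: submx_refl | exact: sub0mx
  | (apply: addmx_sub; atom) | (apply: scalemx_sub; atom) | (apply: opp_sub; atom)
  | (apply: (submx_trans _ (addsmxSl _ _)); atom)
  | (apply: (submx_trans _ (addsmxSr _ _)); atom) ].
Ltac ssum := rewrite ?addsmx_sub; repeat (apply/andP; split); atom.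

Section H.
Variable R : realFieldType.
Notation vec := 'rV[R]_4.
Implicit Types a b c d u v w : vec.

Lemma colE3 a b c : (col_mx a (col_mx b c) :=: a + b + c)%MS.
Proof.
rewrite -addsmxA.
apply: eqmx_trans (eqmx_sym (addsmxE _ _)) _.
exact: adds_eqmx (eqmx_refl _) (eqmx_sym (addsmxE _ _)).
Qed.

Lemma colE4 a b c d : (col_mx a (col_mx b (col_mx c d)) :=: a + b + c + d)%MS.
Proof.
rewrite -!addsmxA.
apply: eqmx_trans (eqmx_sym (addsmxE _ _)) _.
apply: adds_eqmx (eqmx_refl _) _.
apply: eqmx_trans (eqmx_sym (addsmxE _ _)) _.
exact: adds_eqmx (eqmx_refl _) (eqmx_sym (addsmxE _ _)).
Qed.

Lemma collE a b c : collinear a b c <-> (\rank (a + b + c)%MS <= 2)%N.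
Proof. by rewrite /collinear colE3. Qed.

Lemma coplE a b c d : coplanar a b c d <-> (\rank (a + b + c + d)%MS <= 3)%N.
Proof. by rewrite /coplanar colE4. Qed.

Lemma span3E a b c : (span3 a b c :=: a + b + c)%MS.
Proof. exact: colE3. Qed.

Lemma peq_refl u : peq u u.
Proof. by apply/eqmxP; apply: eqmx_refl. Qed.
Lemma peq_sym u v : peq u v -> peq v u.
Proof. by move/eqmxP=> H; apply/eqmxP; apply: eqmx_sym. Qed.
Lemma peq_trans u v w : peq u v -> peq v w -> peq u w.
Proof. by move/eqmxP=> H1 /eqmxP H2; apply/eqmxP; apply: eqmx_trans H1 H2. Qed.
Lemma peq_nz u v : peq u v -> v != 0 -> u != 0.
Proof. by move=> /eqmx_rank H nv; have := rank_rV u; rewrite H rank_rV nv; case: (u != 0). Qed.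
Lemma peq_scale (s : R) u : s != 0 -> peq (s *: u) u.
Proof. by move=> hs; apply/eqmxP; apply: eqmx_scale. Qed.
Lemma peq_opp u : peq (- u) u.
Proof. by apply/eqmxP; apply: eqmx_opp. Qed.
Lemma peq_sub u v (M : 'M[R]_4) : peq u v -> (u <= M)%MS = (v <= M)%MS.
Proof. by move/eqmxP=> H; rewrite H. Qed.

Lemma rank_le1 u : (\rank u <= 1)%N.
Proof. by rewrite rank_rV leq_b1. Qed.

Lemma rank_add2 u v : (\rank (u + v)%MS <= 2)%N.
Proof.
apply: leq_trans (mxrank_adds_leqif u v) _.
by rewrite -[2%N]/(1+1)%N leq_add ?rank_le1.
Qed.

Lemma rank1_eq (V : 'M[R]_4) u : \rank V = 1%N -> (u <= V)%MS -> u != 0 -> (u == V)%MS.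
Proof.
move=> hV hu nz; rewrite -(mxrank_leqif_eq hu).2 hV rank_rV nz //.
Qed.

Lemma indep u v : u != 0 -> v != 0 -> ~ peq u v -> \rank (u + v)%MS = 2%N.
Proof.
move=> nu nv nuv; apply/eqP; rewrite eqn_leq rank_add2 /=.
rewrite ltnNge; apply/negP => h.
have h1 : (1 <= \rank (u + v)%MS)%N.
  by apply: leq_trans (mxrankS (addsmxSl u v)); rewrite rank_rV nu.
have e1 : \rank (u + v)%MS = 1%N by apply/eqP; rewrite eqn_leq h h1.
apply: nuv; apply/eqmxP.
move/eqmxP: (rank1_eq e1 (addsmxSl u v) nu) => E1.
move/eqmxP: (rank1_eq e1 (addsmxSr u v) nv) => E2.
exact: eqmx_trans E1 (eqmx_sym E2).
Qed.

Lemma sub2 w u v : (w <= u + v)%MS -> exists s t, w = s *: u + t *: v.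
Proof.
case/sub_addsmxP=> [[e1 e2]] /= ->.
exists (e1 0 0), (e2 0 0).
by rewrite {1}[e1]mx11_scalar {1}[e2]mx11_scalar !mul_scalar_mx.
Qed.

Lemma sub3 w u v z : (w <= u + v + z)%MS -> exists r s t, w = r *: u + s *: v + t *: z.
Proof.
case/sub_addsmxP=> [[e1 e2]] /= ->.
have : (e1 *m (u + v)%MS <= u + v)%MS by apply: submxMl.
case/sub2=> r [s ->]; exists r, s, (e2 0 0).
by rewrite {1}[e2]mx11_scalar !mul_scalar_mx.
Qed.

Lemma sub_of_rank (A B : 'M[R]_4) : (A <= B)%MS -> (\rank B <= \rank A)%N -> (B <= A)%MS.
Proof.
move=> hAB hr; rewrite -(mxrank_leqif_sup hAB).2.
by rewrite eqn_leq hr mxrankS.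
Qed.

Lemma coll_sub u v w : \rank (u + v)%MS = 2%N -> collinear u v w -> (w <= u + v)%MS.
Proof.
move=> h /collE hc.
have hs : (u + v <= u + v + w)%MS by apply: addsmxSl.
have := sub_of_rank hs; rewrite h => /(_ hc) H.
exact: submx_trans (addsmxSr _ _) H.
Qed.

Lemma noncoll_rank2 u v w : ~ collinear u v w -> \rank (u + v)%MS = 2%N.
Proof.
move=> nc; apply/eqP; rewrite eqn_leq rank_add2 /=.
have h : (2 < \rank (u + v + w)%MS)%N by rewrite ltnNge; apply/negP => /collE.
have h3 := leq_trans h (mxrank_adds_leqif (u + v)%MS w).
have h4 := rank_le1 w.
move: h3 h4; set x := \rank (u + v)%MS; set y := \rank w; lia.
Qed.


Lemma in_plane a b c d : coplanar a b c d -> \rank (a + b + d)%MS = 3%N ->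
  (c <= a + b + d)%MS.
Proof.
move=> /coplE hc h3.
have hs : (a + b + d <= a + b + c + d)%MS.
  ssum.
have := sub_of_rank hs; rewrite h3 => /(_ hc) H.
apply: submx_trans H; ssum.
Qed.

Lemma sum3_peq a b c a' b' c' : peq a a' -> peq b b' -> peq c c' ->
  (a + b + c :=: a' + b' + c')%MS.
Proof.
move=> /eqmxP h1 /eqmxP h2 /eqmxP h3.
exact: adds_eqmx (adds_eqmx h1 h2) h3.
Qed.

Lemma coll_peq3 a b c c' : peq c c' -> collinear a b c -> collinear a b c'.
Proof.
move=> h /collE hc; apply/collE.
by rewrite -(eqmx_rank (introT eqmxP (sum3_peq (peq_refl a) (peq_refl b) h))).
Qed.

Lemma lineL u w Y : Y != 0 -> u != 0 -> w != 0 -> ~ peq u Y -> ~ peq w Y ->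
  ~ peq u w -> collinear u w Y -> exists z, peq z u /\ peq (z + Y) w.
Proof.
move=> nY nu nw nuY nwY nuw hc.
have r2 := indep nu nY nuY.
have : (w <= u + Y)%MS.
  apply: coll_sub r2 _; apply/collE; move/collE: hc.
  by rewrite -addsmxA [(w + Y)%MS]addsmxC addsmxA.
case/sub2=> s [t ew].
have nt : t != 0.
  apply/negP => /eqP t0; apply: nuw; rewrite ew t0 scale0r addr0 in nw *.
  have ns : s != 0 by apply/negP => /eqP s0; rewrite s0 scale0r eqxx in nw.
  exact: peq_sym (peq_scale _ ns).
have ns : s != 0.
  apply/negP => /eqP s0; apply: nwY; rewrite ew s0 scale0r add0r.
  exact: peq_scale _ nt.
exists ((s / t) *: u); split.
  by apply: peq_scale; rewrite mulf_neq0 ?invr_eq0.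
have -> : (s / t) *: u + Y = t^-1 *: w.
  by rewrite ew scalerDr !scalerA mulVf // scale1r mulrC.
by apply: peq_scale; rewrite invr_eq0.
Qed.

Lemma cap1 (S T : 'M[R]_4) : \rank S = 2%N -> \rank T = 2%N -> \rank (S + T)%MS = 3%N ->
  \rank (S :&: T)%MS = 1%N.
Proof. by move=> h1 h2 h3; have := mxrank_sum_cap S T; rewrite h1 h2 h3; lia. Qed.

Lemma peq_cap (S T : 'M[R]_4) Y y : \rank S = 2%N -> \rank T = 2%N ->
  \rank (S + T)%MS = 3%N -> (Y <= S)%MS -> (Y <= T)%MS -> (y <= S)%MS -> (y <= T)%MS ->
  Y != 0 -> y != 0 -> peq Y y.
Proof.
move=> h1 h2 h3 YS YT yS yT nY ny.
have c1 := cap1 h1 h2 h3.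
have s1 : (Y <= S :&: T)%MS by rewrite sub_capmx YS YT.
have s2 : (y <= S :&: T)%MS by rewrite sub_capmx yS yT.
move/eqmxP: (rank1_eq c1 s1 nY) => E1.
move/eqmxP: (rank1_eq c1 s2 ny) => E2.
apply/eqmxP; exact: eqmx_trans E1 (eqmx_sym E2).
Qed.

Lemma noncoll3 a b c : ~ collinear a b c -> (2 < \rank (a + b + c)%MS)%N.
Proof. by move=> nc; rewrite ltnNge; apply/negP => /collE. Qed.

Lemma rank_add3 u v w : (\rank (u + v + w)%MS <= 3)%N.
Proof.
apply: leq_trans (mxrank_adds_leqif (u + v)%MS w) _.
by rewrite -[3%N]/(2+1)%N leq_add ?rank_add2 ?rank_le1.
Qed.

Lemma plane_sub g0 gl gk gkl a b c : peq g0 a -> peq gk b -> peq gl c ->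
  coplanar g0 gl gkl gk -> \rank (span3 a b c) = 3%N -> (gkl <= span3 a b c)%MS.
Proof.
move=> h1 h2 h3 hc hr.
have E := sum3_peq h1 h2 h3.
have E' : (g0 + gl + gk :=: a + b + c)%MS.
  apply: eqmx_trans _ E; apply/eqmxP/andP; split; ssum.
have hr' : \rank (g0 + gl + gk)%MS = 3%N by rewrite E' -span3E.
have := in_plane hc hr'; rewrite E' => H.
by rewrite span3E.
Qed.

Lemma quad_eq (V : zmodType) (a0 a1 b0 b1 : V) : a1 + b0 = (a0 + b0) - (a0 + b1) + (a1 + b1).
Proof.
by rewrite opprD [a0 + b0 + _]addrACA subrr add0r [RHS]addrC -addrA [b1 + _]addrCA subrr addr0.
Qed.

End H.

Lemma ord_cases N (k : 'I_N.+1) : k = ord0 \/ k = ord_max \/ (0 < k < N)%N.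
Proof.
case: k => m hm.
case: (posnP m) => [m0|mp]; first by left; apply: val_inj.
case: (eqVneq m N) => [mN|mN]; first by right; left; apply: val_inj.
right; right; rewrite /=; move: mp hm mN; clear; lia.
Qed.


Unset Implicit Arguments.

Theorem proposition8p1 (R : realFieldType) (N : nat)
    (x00 x10 x11 x01 y1 y2 : 'rV[R]_4)
    (p0 p1 q0 q1 : 'I_N.+1 -> 'rV[R]_4) :
  (2 <= N)%N ->
  is_pt x00 -> is_pt x10 -> is_pt x11 -> is_pt x01 ->
  is_pt y1 -> is_pt y2 ->
  (forall k, is_pt (p0 k)) -> (forall k, is_pt (p1 k)) ->
  (forall k, is_pt (q0 k)) -> (forall k, is_pt (q1 k)) ->
  coplanar x00 x10 x11 x01 ->
  collinear x00 x10 y1 -> collinear x01 x11 y1 ->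
  collinear x00 x01 y2 -> collinear x10 x11 y2 ->
  peq (p0 ord0) x00 -> peq (p0 ord_max) x10 ->
  peq (p1 ord0) x01 -> peq (p1 ord_max) x11 ->
  peq (q0 ord0) x00 -> peq (q0 ord_max) x01 ->
  peq (q1 ord0) x10 -> peq (q1 ord_max) x11 ->
  (forall k, collinear (p0 k) (p1 k) y2) ->
  (forall l, collinear (q0 l) (q1 l) y1) ->
  general_position x00 x10 x11 x01 y1 y2 p0 p1 q0 q1 ->
  exists f : 'I_N.+1 -> 'I_N.+1 -> 'rV[R]_4,
    [/\ multi_Q_net f, has_boundary f p0 p1 q0 q1 &
        forall g, multi_Q_net g -> has_boundary g p0 p1 q0 q1 ->
          forall k l, peq (g k l) (f k l)].
Proof.
move=> hN nx00 nx10 nx11 nx01 ny1 ny2 np0 np1 nq0 nq1 hcop c1 c2 c3 c4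
  e1 e2 e3 e4 e5 e6 e7 e8 hp hq [[nc1 nc2 nc3 nc4] hdist hpl].
move/coplE: (hcop) => hcop'.
have r4 := noncoll3 nc4.
have r3 : \rank (x00 + x10 + x01)%MS = 3%N.
  apply/eqP; rewrite eqn_leq; apply/andP; split.
    apply: leq_trans hcop'; apply: mxrankS; ssum.
  apply: leq_trans r4 _; apply: mxrankS; ssum.
have rX : \rank (x00 + x10 + x11 + x01)%MS = 3%N.
  apply/eqP; rewrite eqn_leq hcop' -{1}r3; apply: mxrankS; ssum.
have : (x11 <= x00 + x10 + x01)%MS.
  have hs : (x00 + x10 + x01 <= x00 + x10 + x11 + x01)%MS by ssum.
  apply: submx_trans (sub_of_rank hs _) ; first by ssum.
  by rewrite r3 rX.
case/sub3 => a [b [c ex11]].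
have na : a != 0.
  apply/negP => /eqP a0; apply: nc2; apply/collE.
  apply: leq_trans (rank_add2 x10 x01); apply: mxrankS.
  rewrite ex11 a0 scale0r add0r; ssum.
have nb : b != 0.
  apply/negP => /eqP b0; apply: nc3; apply/collE.
  apply: leq_trans (rank_add2 x01 x00); apply: mxrankS.
  rewrite ex11 b0 scale0r addr0; ssum.
have nc : c != 0.
  apply/negP => /eqP c0; apply: nc1; apply/collE.
  apply: leq_trans (rank_add2 x00 x10); apply: mxrankS.
  rewrite ex11 c0 scale0r addr0; ssum.
set A0 := (- a) *: x00.
set AN := b *: x10.
set Y2 := c *: x01 + a *: x00.
set Y1 := A0 - AN.
have eA0Y2 : A0 + Y2 = c *: x01 by rewrite /A0 /Y2 scaleNr addrCA addNr addr0.
have eANY2 : AN + Y2 = x11.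
  by rewrite ex11 /AN /Y2 addrC -addrA addrC.
have eY2 : Y2 = x11 - b *: x10 by rewrite -eANY2 [AN + Y2]addrC addrK.
have eY1 : Y1 = c *: x01 - x11.
  by rewrite -eA0Y2 -eANY2 opprD addrACA subrr addr0.
have nY2 : Y2 != 0.
  have ex01 : x01 = c^-1 *: (Y2 - a *: x00) by rewrite /Y2 addrK scalerA mulVf // scale1r.
  apply/negP => /eqP Y0; apply: nc4; apply/collE.
  apply: leq_trans (rank_add2 x00 x10); apply: mxrankS; rewrite ex01 Y0; ssum.
have nY1 : Y1 != 0.
  have ex00 : x00 = (- a)^-1 *: (Y1 + AN).
    by rewrite /Y1 subrK /A0 scalerA mulVf ?oppr_eq0 // scale1r.
  apply/negP => /eqP Y0; apply: nc4; apply/collE.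
  apply: leq_trans (rank_add2 x01 x10); apply: mxrankS; rewrite ex00 Y0; ssum.
have rS2 : \rank (x00 + x01)%MS = 2%N by rewrite addsmxC; exact: noncoll_rank2 nc4.
have rT2 : \rank (x10 + x11)%MS = 2%N by exact: noncoll_rank2 nc2.
have rS1 : \rank (x00 + x10)%MS = 2%N by exact: noncoll_rank2 nc1.
have rT1 : \rank (x01 + x11)%MS = 2%N by rewrite addsmxC; exact: noncoll_rank2 nc3.
have hY2 : peq Y2 y2.
  apply: (peq_cap rS2 rT2) => //.
  - rewrite -[RHS]rX; apply: eqmx_rank; apply/andP; split; ssum.
  - by rewrite /Y2; ssum.
  - by rewrite eY2; ssum.
  - exact: coll_sub rS2 c3.
  - exact: coll_sub rT2 c4.
have hY1 : peq Y1 y1.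
  apply: (peq_cap rS1 rT1) => //.
  - rewrite -[RHS]rX; apply: eqmx_rank; apply/andP; split; ssum.
  - by rewrite /Y1 /A0 /AN; ssum.
  - by rewrite eY1; ssum.
  - exact: coll_sub rS1 c1.
  - exact: coll_sub rT1 c2.
have pA0 : peq A0 x00 by apply: peq_scale; rewrite oppr_eq0.
have pAN : peq AN x10 by apply: peq_scale.
have Ha : forall k : 'I_N.+1, exists z, [/\ peq z (p0 k), peq (z + Y2) (p1 k),
    (val k = 0%N -> z = A0) & (val k = N -> z = AN)].
  move=> k; case: (ord_cases k) => [->|[->|/andP[k0 kN]]].
  - exists A0; split => //.
    + exact: peq_trans pA0 (peq_sym e1).
    + by rewrite eA0Y2; apply: peq_trans (peq_scale _ nc) (peq_sym e3).
    + by move=> /= h; move: hN; rewrite -h.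
  - exists AN; split => //.
    + exact: peq_trans pAN (peq_sym e2).
    + by rewrite eANY2; apply: peq_sym e4.
    + by move=> /= h; move: hN; rewrite h.
  - have [[d1 d2 d3] _] := hdist k k0 kN.
    have [z [z1 z2]] : exists z, peq z (p0 k) /\ peq (z + Y2) (p1 k).
      apply: (lineL nY2 (np0 k) (np1 k)) => //.
      + by move=> h; apply: d1; apply: peq_trans h hY2.
      + by move=> h; apply: d2; apply: peq_trans h hY2.
      + exact: coll_peq3 (peq_sym hY2) (hp k).
    exists z; split => // h; move: k0 kN; rewrite h //; lia.
have Hb : forall l : 'I_N.+1, exists z, [/\ peq (A0 + z) (q0 l), peq (AN + z) (q1 l),
    (val l = 0%N -> z = 0) & (val l = N -> z = Y2)].
  move=> l; case: (ord_cases l) => [->|[->|/andP[l0 lN]]].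
  - exists 0; rewrite !addr0; split => //.
    + exact: peq_trans pA0 (peq_sym e5).
    + exact: peq_trans pAN (peq_sym e7).
    + by move=> /= h; move: hN; rewrite -h.
  - exists Y2; split => //.
    + by rewrite eA0Y2; apply: peq_trans (peq_scale _ nc) (peq_sym e6).
    + by rewrite eANY2; apply: peq_sym e8.
    + by move=> /= h; move: hN; rewrite h.
  - have [_ [d1 d2 d3]] := hdist l l0 lN.
    have hY1' : peq (- Y1) y1 := peq_trans (peq_opp Y1) hY1.
    have [z [z1 z2]] : exists z, peq z (q0 l) /\ peq (z + - Y1) (q1 l).
      have nY1' : - Y1 != 0 by rewrite oppr_eq0.
      apply: (lineL nY1' (nq0 l) (nq1 l)) => //.
      + by move=> h; apply: d1; apply: peq_trans h hY1'.
      + by move=> h; apply: d2; apply: peq_trans h hY1'.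
      + exact: coll_peq3 (peq_sym hY1') (hq l).
    exists (z - A0); split.
    + by rewrite addrC subrK.
    + by move: z2; rewrite /Y1 opprB addrCA.
    + by move=> h; move: l0 lN; rewrite h //; lia.
    + by move=> h; move: l0 lN; rewrite h //; lia.
have [af Paf] := fin_all_exists Ha.
have [bf Pbf] := fin_all_exists Hb.
have af0 : af ord0 = A0 by case: (Paf ord0) => _ _ h _; exact: h.
have afN : af ord_max = AN by case: (Paf ord_max) => _ _ _ h; exact: h.
have bf0 : bf ord0 = 0 by case: (Pbf ord0) => _ _ h _; exact: h.
have bfN : bf ord_max = Y2 by case: (Pbf ord_max) => _ _ _ h; exact: h.
pose f k l := af k + bf l.
have fb : has_boundary f p0 p1 q0 q1.
  move=> k; rewrite /f; split.
  - by rewrite bf0 addr0; case: (Paf k).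
  - by rewrite bfN; case: (Paf k).
  - by rewrite af0; case: (Pbf k).
  - by rewrite afN; case: (Pbf k).
have fq : forall i0 i1 j0 j1 : 'I_N.+1,
    coplanar (f i0 j0) (f i0 j1) (f i1 j1) (f i1 j0).
  move=> i0 i1 j0 j1; apply/coplE; rewrite /f.
  apply: leq_trans (rank_add3 (af i0 + bf j0) (af i0 + bf j1) (af i1 + bf j1)).
  apply: mxrankS; rewrite addsmx_sub; apply/andP; split; first by ssum.
  rewrite (quad_eq (af i0) (af i1) (bf j0) (bf j1)); ssum.
have Hin : forall g : 'I_N.+1 -> 'I_N.+1 -> 'rV[R]_4,
    (forall i0 i1 j0 j1 : 'I_N.+1, i0 != i1 -> j0 != j1 ->
       coplanar (g i0 j0) (g i0 j1) (g i1 j1) (g i1 j0)) ->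
    has_boundary g p0 p1 q0 q1 ->
    forall k l : 'I_N.+1, (0 < k)%N -> (k < N)%N -> (0 < l)%N -> (l < N)%N ->
    (g k l <= span3 x00 (p0 k) (q0 l) :&: span3 x10 (p0 k) (q1 l)
               :&: span3 x01 (p1 k) (q0 l))%MS.
  move=> g gq gb k l k0 kN l0 lN.
  have [r1 r2 r3' _] := hpl k l k0 kN l0 lN.
  have nk0 : ord0 != k by apply/eqP => h; move: k0; rewrite -h.
  have nkN : ord_max != k by apply/eqP => h; move: kN; rewrite -h /= ltnn.
  have nl0 : ord0 != l by apply/eqP => h; move: l0; rewrite -h.
  have nlN : ord_max != l by apply/eqP => h; move: lN; rewrite -h /= ltnn.
  have [g00 g0N _ _] := gb ord0.
  have [gN0 _ _ _] := gb ord_max.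
  have [gk0 gkN _ _] := gb k.
  have [_ _ g0l gNl] := gb l.
  rewrite !sub_capmx; apply/andP; split; first (apply/andP; split).
  - apply: (plane_sub (peq_trans g00 e1) gk0 g0l) => //.
    exact: gq ord0 k ord0 l nk0 nl0.
  - apply: (plane_sub (peq_trans gN0 e2) gk0 gNl) => //.
    exact: gq ord_max k ord0 l nkN nl0.
  - apply: (plane_sub (peq_trans g0N e3) gkN g0l) => //.
    exact: gq ord0 k ord_max l nk0 nlN.
have fnz : forall k l, f k l != 0.
  move=> k l; case: (ord_cases k) => [->|[->|/andP[k0 kN]]].
  - by case: (fb l) => _ _ h _; exact: peq_nz h (nq0 l).
  - by case: (fb l) => _ _ _ h; exact: peq_nz h (nq1 l).
  case: (ord_cases l) => [->|[->|/andP[l0 lN]]].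
  - by case: (fb k) => h _ _ _; exact: peq_nz h (np0 k).
  - by case: (fb k) => _ h _ _; exact: peq_nz h (np1 k).
  have [r1 _ _ _] := hpl k l k0 kN l0 lN.
  apply/negP => /eqP h0.
  have eb : bf l = - af k by apply/eqP; rewrite -addr_eq0 addrC; apply/eqP.
  have [pk _ _ _] := Paf k.
  have [ql _ _ _] := Pbf l.
  have E := sum3_peq (peq_sym pA0) (peq_sym pk) (peq_sym ql).
  move: r1; rewrite span3E E eb => r1.
  have : (3 <= 2)%N; last by [].
  rewrite -[X in (X <= _)%N]r1.
  apply: leq_trans (rank_add2 A0 (af k)); apply: mxrankS; ssum.
exists f; split.
- by split; [exact: fnz | move=> i0 i1 j0 j1 _ _; exact: fq].
- exact: fb.
move=> g [gnz gq] gb k l.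
case: (ord_cases k) => [->|[->|/andP[k0 kN]]].
- by case: (gb l) => _ _ h _; case: (fb l) => _ _ h' _; exact: peq_trans h (peq_sym h').
- by case: (gb l) => _ _ _ h; case: (fb l) => _ _ _ h'; exact: peq_trans h (peq_sym h').
case: (ord_cases l) => [->|[->|/andP[l0 lN]]].
- by case: (gb k) => h _ _ _; case: (fb k) => h' _ _ _; exact: peq_trans h (peq_sym h').
- by case: (gb k) => _ h _ _; case: (fb k) => _ h' _ _; exact: peq_trans h (peq_sym h').
have [_ _ _ rc] := hpl k l k0 kN l0 lN.
have Hg := Hin g gq gb k l k0 kN l0 lN.
have Hf := Hin f (fun i0 i1 j0 j1 _ _ => fq i0 i1 j0 j1) fb k l k0 kN l0 lN.
move/eqmxP: (rank1_eq rc Hg (gnz k l)) => E1.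
move/eqmxP: (rank1_eq rc Hf (fnz k l)) => E2.
apply/eqmxP; exact: eqmx_trans E1 (eqmx_sym E2).
Qed.
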